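(* For every finite multiset $\Gamma$ and formulas $\varphi,\psi,\delta,\chi$: if $\Gamma,(\varphi\to\psi)\to\delta\Rightarrow\chi$ is provable in $\mathsf{G4iSLt}$, then $\Gamma,\varphi,\psi\to\delta,\psi\to\delta\Rightarrow\chi$ is provable in $\mathsf{G4iSLt}$.
   Context: Formulas are built by the grammar $\varphi ::= p \mid \bot \mid \varphi\land\varphi \mid \varphi\lor\varphi \mid \varphi\to\varphi \mid \Box\varphi$, with $p$ ranging over a countably infinite set of propositional variables. For a multiset $\Gamma$, $\Box\Gamma=\{\Box\psi:\psi\in\Gamma\}$; a boxed formula is one of the form $\Box\psi$. A sequent is $\Gamma\Rightarrow\chi$ with $\Gamma$ a finite multiset of formulas and $\chi$ a formula. The sequent calculus $\mathsf{G4iSLt}$ has the following rules, where $p$ is a propositional variable and $\Phi$ always denotes a multiset containing no boxed formula: (⊥L) $\bot,\Gamma\Rightarrow\chi$ (no premise); (IdP) $\Gamma,p\Rightarrow p$ (no premise); (∧L) from $\Gamma,\varphi,\psi\Rightarrow\chi$ infer $\Gamma,\varphi\land\psi\Rightarrow\chi$; (∧R) from $\Gamma\Rightarrow\varphi$ and $\Gamma\Rightarrow\psi$ infer $\Gamma\Rightarrow\varphi\land\psi$; (∨L) from $\Gamma,\varphi\Rightarrow\chi$ and $\Gamma,\psi\Rightarrow\chi$ infer $\Gamma,\varphi\lor\psi\Rightarrow\chi$; (∨R$_i$), $i\in\{1,2\}$: from $\Gamma\Rightarrow\varphi_i$ infer $\Gamma\Rightarrow\varphi_1\lor\varphi_2$;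 (p→L) from $\Gamma,p,\varphi\Rightarrow\chi$ infer $\Gamma,p,p\to\varphi\Rightarrow\chi$; (→R) from $\Gamma,\varphi\Rightarrow\psi$ infer $\Gamma\Rightarrow\varphi\to\psi$; (□→L) from $\Phi,\Gamma,\psi,\Box\varphi\Rightarrow\varphi$ and $\Phi,\Box\Gamma,\psi\Rightarrow\chi$ infer $\Phi,\Box\Gamma,\Box\varphi\to\psi\Rightarrow\chi$; (SLtR) from $\Phi,\Gamma,\Box\varphi\Rightarrow\varphi$ infer $\Phi,\Box\Gamma\Rightarrow\Box\varphi$; (∧→L) from $\Gamma,\varphi\to(\psi\to\chi)\Rightarrow\delta$ infer $\Gamma,(\varphi\land\psi)\to\chi\Rightarrow\delta$; (∨→L) from $\Gamma,\varphi\to\chi,\psi\to\chi\Rightarrow\delta$ infer $\Gamma,(\varphi\lor\psi)\to\chi\Rightarrow\delta$; (→→L) from $\Gamma,\psi\to\chi\Rightarrow\varphi\to\psi$ and $\Gamma,\chi\Rightarrow\delta$ infer $\Gamma,(\varphi\to\psi)\to\chi\Rightarrow\delta$. A proof of a sequent $S$ is a finite tree of sequents with root $S$ in which each interior node together with its children forms an instance of a rule (conclusion, premises) and each leaf is the conclusion of a premise-free rule; $S$ is provable if it has a proof. *)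

(* Defs.v *)
(* Sequents Γ ⇒ χ with Γ a finite multiset, represented as a
   list; every rule is closed under permutation of the antecedent, so the
   derivability relation only depends on the multiset. *)
From Stdlib Require Import List Permutation.
Import ListNotations.

Inductive form : Type :=
| Var : nat -> form
| Bot : form
| And : form -> form -> form
| Or  : form -> form -> form
| Imp : form -> form -> form
| Box : form -> form.

Definition is_boxed (f : form) : Prop :=
  match f with Box _ => True | _ => False end.

Definition box_free (Φ : list form) : Prop := Forall (fun f => ~ is_boxed f) Φ.

Definition boxes (Γ : list form) : list form := map Box Γ.

Inductive G4iSLt : list form -> form -> Prop :=
| BotL : forall Δ Γ χ, Permutation Δ (Bot :: Γ) -> G4iSLt Δ χ
| IdP : forall Δ Γ p, Permutation Δ (Var p :: Γ) -> G4iSLt Δ (Var p)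
| AndL : forall Δ Γ φ ψ χ, Permutation Δ (And φ ψ :: Γ) ->
    G4iSLt (φ :: ψ :: Γ) χ -> G4iSLt Δ χ
| AndR : forall Γ φ ψ, G4iSLt Γ φ -> G4iSLt Γ ψ -> G4iSLt Γ (And φ ψ)
| OrL : forall Δ Γ φ ψ χ, Permutation Δ (Or φ ψ :: Γ) ->
    G4iSLt (φ :: Γ) χ -> G4iSLt (ψ :: Γ) χ -> G4iSLt Δ χ
| OrR1 : forall Γ φ ψ, G4iSLt Γ φ -> G4iSLt Γ (Or φ ψ)
| OrR2 : forall Γ φ ψ, G4iSLt Γ ψ -> G4iSLt Γ (Or φ ψ)
| PImpL : forall Δ Γ p φ χ, Permutation Δ (Var p :: Imp (Var p) φ :: Γ) ->
    G4iSLt (Var p :: φ :: Γ) χ -> G4iSLt Δ χ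
| ImpR : forall Γ φ ψ, G4iSLt (φ :: Γ) ψ -> G4iSLt Γ (Imp φ ψ)
| BoxImpL : forall Δ Φ Γ φ ψ χ, box_free Φ ->
    Permutation Δ (Imp (Box φ) ψ :: Φ ++ boxes Γ) ->
    G4iSLt (Box φ :: ψ :: Φ ++ Γ) φ ->
    G4iSLt (ψ :: Φ ++ boxes Γ) χ -> G4iSLt Δ χ
| SLtR : forall Δ Φ Γ φ, box_free Φ ->
    Permutation Δ (Φ ++ boxes Γ) ->
    G4iSLt (Box φ :: Φ ++ Γ) φ -> G4iSLt Δ (Box φ)
| AndImpL : forall Δ Γ φ ψ χ δ, Permutation Δ (Imp (And φ ψ) χ :: Γ) ->
    G4iSLt (Imp φ (Imp ψ χ) :: Γ) δ -> G4iSLt Δ δ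
| OrImpL : forall Δ Γ φ ψ χ δ, Permutation Δ (Imp (Or φ ψ) χ :: Γ) ->
    G4iSLt (Imp φ χ :: Imp ψ χ :: Γ) δ -> G4iSLt Δ δ
| ImpImpL : forall Δ Γ φ ψ χ δ, Permutation Δ (Imp (Imp φ ψ) χ :: Γ) ->
    G4iSLt (Imp ψ χ :: Γ) (Imp φ ψ) -> G4iSLt (χ :: Γ) δ -> G4iSLt Δ δ.

(* Main.v *)
Require Import Defs.
From Stdlib Require Import List Permutation Lia.
Import ListNotations.

Lemma form_eq_dec : forall x y : form, {x = y} + {x <> y}.
Proof. repeat decide equality. Qed.

Ltac pc :=
  unfold boxes in *; rewrite ?map_app in *;
  apply (Permutation_count_occ form_eq_dec); let x := fresh "x" in intro x;
  repeat match goal with H : Permutation _ _ |- _ =>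
    let H' := fresh "HC" in
    pose proof (proj1 (Permutation_count_occ form_eq_dec _ _) H x) as H'; clear H end;
  repeat progress (simpl in *; rewrite ?count_occ_app in *);
  repeat match goal with
  | |- context [form_eq_dec ?a ?b] => destruct (form_eq_dec a b)
  | H : context [form_eq_dec ?a ?b] |- _ => destruct (form_eq_dec a b) end;
  lia.

Definition nb (X : form) : Prop :=
  match X with Var _ | Bot | Box _ => False | _ => True end.

Lemma nb_nbox : forall X, nb X -> ~ is_boxed X.
Proof. destruct X; simpl; tauto. Qed.

Lemma box_dec : forall A, (exists B, A = Box B) \/ ~ is_boxed A.
Proof. destruct A; simpl; eauto. Qed.

Lemma box_free_perm : forall l l', box_free l -> Permutation l l' -> box_free l'.
Proof.
  unfold box_free; intros l l' H HP. rewrite Forall_forall in *. intros x Hx.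
  apply H. eapply Permutation_in; [apply Permutation_sym; exact HP | exact Hx].
Qed.

Lemma box_free_app : forall l1 l2, box_free l1 -> box_free l2 -> box_free (l1 ++ l2).
Proof. intros; apply Forall_app; auto. Qed.

Lemma box_free_tail : forall a l, box_free (a :: l) -> box_free l.
Proof. intros a l H; inversion H; auto. Qed.

Lemma split_ctx : forall S, exists Sn Sb, box_free Sn /\ Permutation S (Sn ++ boxes Sb).
Proof.
  induction S as [|a S IH].
  - exists (@nil form), (@nil form); split; [constructor | simpl; constructor].
  - destruct IH as (Sn & Sb & H1 & H2). destruct (box_dec a) as [[B ->]|Hn].
    + exists Sn, (B :: Sb). split; auto. pc.
    + exists (a :: Sn), Sb. split; [constructor; auto | pc].
Qed.

Lemma perm_split : forall (A : form) D X G, Permutation (A :: D) (X :: G) ->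
  (A = X /\ Permutation D G) \/ (exists G', Permutation G (A :: G') /\ Permutation D (X :: G')).
Proof.
  intros A D X G H. destruct (form_eq_dec A X) as [<-|Hne].
  - left. split; auto. eapply Permutation_cons_inv; eauto.
  - right. assert (Hin : In A G).
    { assert (H0 : In A (X :: G)) by (eapply Permutation_in; [exact H | left; auto]).
      destruct H0; [congruence | auto]. }
    destruct (in_split _ _ Hin) as (G1 & G2 & ->).
    exists (G1 ++ G2). split; pc.
Qed.

Lemma perm_split_nb : forall X G Phi G0, ~ is_boxed X -> Permutation (X :: G) (Phi ++ boxes G0) ->
  exists Phi1, Permutation Phi (X :: Phi1) /\ Permutation G (Phi1 ++ boxes G0).
Proof.
  intros X G Phi G0 Hn H.
  assert (Hin : In X (Phi ++ boxes G0)) by (eapply Permutation_in; [exact H | left; auto]).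
  apply in_app_or in Hin as [Hin|Hin].
  - destruct (in_split _ _ Hin) as (P1 & P2 & ->). exists (P1 ++ P2). split; pc.
  - unfold boxes in Hin. apply in_map_iff in Hin as (y & <- & _). simpl in Hn. tauto.
Qed.

Lemma perm_split_box : forall B G Phi G0, box_free Phi -> Permutation (Box B :: G) (Phi ++ boxes G0) ->
  exists G1, Permutation G0 (B :: G1) /\ Permutation G (Phi ++ boxes G1).
Proof.
  intros B G Phi G0 Hb H.
  assert (Hin : In (Box B) (Phi ++ boxes G0)) by (eapply Permutation_in; [exact H | left; auto]).
  apply in_app_or in Hin as [Hin|Hin].
  - unfold box_free in Hb; rewrite Forall_forall in Hb. exfalso; apply (Hb _ Hin); simpl; auto.
  - unfold boxes in Hin. apply in_map_iff in Hin as (y & Hy & Hin). injection Hy as ->.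
    destruct (in_split _ _ Hin) as (P1 & P2 & ->). exists (P1 ++ P2). split; pc.
Qed.

Lemma G4_perm : forall D c, G4iSLt D c -> forall D', Permutation D D' -> G4iSLt D' c.
Proof.
  induction 1; intros D' HP.
  - apply (BotL _ Γ); pc.
  - apply (IdP _ Γ); pc.
  - apply (AndL _ Γ φ ψ); [pc | assumption].
  - apply AndR; auto.
  - apply (OrL _ Γ φ ψ); [pc | assumption | assumption].
  - apply OrR1; auto.
  - apply OrR2; auto.
  - apply (PImpL _ Γ p φ); [pc | assumption].
  - apply ImpR; apply IHG4iSLt; auto.
  - apply (BoxImpL _ Φ Γ φ ψ); [assumption | pc | assumption | assumption].
  - apply (SLtR _ Φ Γ φ); [assumption | pc | assumption].
  - apply (AndImpL _ Γ φ ψ χ); [pc | assumption].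
  - apply (OrImpL _ Γ φ ψ χ); [pc | assumption].
  - apply (ImpImpL _ Γ φ ψ χ); [pc | assumption | assumption].
Qed.

Ltac gp H := eapply G4_perm; [exact H | pc].

Lemma wk : forall D c, G4iSLt D c -> forall A, G4iSLt (A :: D) c.
Proof.
  induction 1; intro A0.
  - apply (BotL _ (A0 :: Γ)); pc.
  - apply (IdP _ (A0 :: Γ)); pc.
  - apply (AndL _ (A0 :: Γ) φ ψ); [pc | gp (IHG4iSLt A0)].
  - apply AndR; auto.
  - apply (OrL _ (A0 :: Γ) φ ψ); [pc | gp (IHG4iSLt1 A0) | gp (IHG4iSLt2 A0)].
  - apply OrR1; auto.
  - apply OrR2; auto.
  - apply (PImpL _ (A0 :: Γ) p φ); [pc | gp (IHG4iSLt A0)].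
  - apply ImpR. gp (IHG4iSLt A0).
  - destruct (box_dec A0) as [[B ->]|Hn].
    + apply (BoxImpL _ Φ (B :: Γ) φ ψ); [assumption | pc | gp (IHG4iSLt1 B) | gp (IHG4iSLt2 (Box B))].
    + apply (BoxImpL _ (A0 :: Φ) Γ φ ψ); [constructor; auto | pc | gp (IHG4iSLt1 A0) | gp (IHG4iSLt2 A0)].
  - destruct (box_dec A0) as [[B ->]|Hn].
    + apply (SLtR _ Φ (B :: Γ) φ); [assumption | pc | gp (IHG4iSLt B)].
    + apply (SLtR _ (A0 :: Φ) Γ φ); [constructor; auto | pc | gp (IHG4iSLt A0)].
  - apply (AndImpL _ (A0 :: Γ) φ ψ χ); [pc | gp (IHG4iSLt A0)].
  - apply (OrImpL _ (A0 :: Γ) φ ψ χ); [pc | gp (IHG4iSLt A0)].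
  - apply (ImpImpL _ (A0 :: Γ) φ ψ χ); [pc | gp (IHG4iSLt1 A0) | gp (IHG4iSLt2 A0)].
Qed.

Lemma wk_list : forall S D c, G4iSLt D c -> G4iSLt (S ++ D) c.
Proof. induction S; intros; simpl; auto using wk. Qed.

Lemma unbox : forall D c, G4iSLt D c -> forall B G, Permutation D (Box B :: G) -> G4iSLt (B :: G) c.
Proof.
  induction 1; intros B0 G0 HP.
  - assert (HP' : Permutation (Box B0 :: G0) (Bot :: Γ)) by pc.
    apply perm_split in HP' as [[? _]|(G' & H1 & H2)]; [discriminate|].
    apply (BotL _ (B0 :: G')); pc.
  - assert (HP' : Permutation (Box B0 :: G0) (Var p :: Γ)) by pc.
    apply perm_split in HP' as [[? _]|(G' & H1 & H2)]; [discriminate|].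
    apply (IdP _ (B0 :: G')); pc.
  - assert (HP' : Permutation (Box B0 :: G0) (And φ ψ :: Γ)) by pc.
    apply perm_split in HP' as [[? _]|(G' & H1 & H2)]; [discriminate|].
    apply (AndL _ (B0 :: G') φ ψ); [pc | gp (IHG4iSLt B0 (φ :: ψ :: G') ltac:(pc))].
  - apply AndR; eauto.
  - assert (HP' : Permutation (Box B0 :: G0) (Or φ ψ :: Γ)) by pc.
    apply perm_split in HP' as [[? _]|(G' & H2 & H3)]; [discriminate|].
    apply (OrL _ (B0 :: G') φ ψ); [pc | gp (IHG4iSLt1 B0 (φ :: G') ltac:(pc)) | gp (IHG4iSLt2 B0 (ψ :: G') ltac:(pc))].
  - apply OrR1; eauto.
  - apply OrR2; eauto.
  - assert (HP' : Permutation (Box B0 :: G0) (Imp (Var p) φ :: Var p :: Γ)) by pc.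
    apply perm_split in HP' as [[? _]|(G' & H1 & H2)]; [discriminate|].
    assert (HP'' : Permutation (Box B0 :: G') (Var p :: Γ)) by pc.
    apply perm_split in HP'' as [[? _]|(G'' & H3 & H4)]; [discriminate|].
    apply (PImpL _ (B0 :: G'') p φ); [pc | gp (IHG4iSLt B0 (Var p :: φ :: G'') ltac:(pc))].
  - apply ImpR. gp (IHG4iSLt B0 (φ :: G0) ltac:(pc)).
  - assert (HP' : Permutation (Box B0 :: G0) (Imp (Box φ) ψ :: Φ ++ boxes Γ)) by pc.
    apply perm_split in HP' as [[? _]|(G' & H3 & H4)]; [discriminate|].
    destruct (perm_split_box B0 G' Φ Γ H ltac:(pc)) as (G1 & H5 & H6).
    destruct (box_dec B0) as [[B' ->]|Hn].
    + apply (BoxImpL _ Φ (B' :: G1) φ ψ); [assumption | pc | |].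
      * gp (IHG4iSLt1 B' (Box φ :: ψ :: Φ ++ G1) ltac:(pc)).
      * gp (IHG4iSLt2 (Box B') (ψ :: Φ ++ boxes G1) ltac:(pc)).
    + apply (BoxImpL _ (B0 :: Φ) G1 φ ψ); [constructor; auto | pc | gp H1 |].
      gp (IHG4iSLt2 B0 (ψ :: Φ ++ boxes G1) ltac:(pc)).
  - destruct (perm_split_box B0 G0 Φ Γ H ltac:(pc)) as (G1 & H5 & H6).
    destruct (box_dec B0) as [[B' ->]|Hn].
    + apply (SLtR _ Φ (B' :: G1) φ); [assumption | pc | gp (IHG4iSLt B' (Box φ :: Φ ++ G1) ltac:(pc))].
    + apply (SLtR _ (B0 :: Φ) G1 φ); [constructor; auto | pc | gp H1].
  - assert (HP' : Permutation (Box B0 :: G0) (Imp (And φ ψ) χ :: Γ)) by pc.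
    apply perm_split in HP' as [[? _]|(G' & H1 & H2)]; [discriminate|].
    apply (AndImpL _ (B0 :: G') φ ψ χ); [pc | gp (IHG4iSLt B0 (Imp φ (Imp ψ χ) :: G') ltac:(pc))].
  - assert (HP' : Permutation (Box B0 :: G0) (Imp (Or φ ψ) χ :: Γ)) by pc.
    apply perm_split in HP' as [[? _]|(G' & H1 & H2)]; [discriminate|].
    apply (OrImpL _ (B0 :: G') φ ψ χ); [pc | gp (IHG4iSLt B0 (Imp φ χ :: Imp ψ χ :: G') ltac:(pc))].
  - assert (HP' : Permutation (Box B0 :: G0) (Imp (Imp φ ψ) χ :: Γ)) by pc.
    apply perm_split in HP' as [[? _]|(G' & H2 & H3)]; [discriminate|].
    apply (ImpImpL _ (B0 :: G') φ ψ χ); [pc | gp (IHG4iSLt1 B0 (Imp ψ χ :: G') ltac:(pc)) | gp (IHG4iSLt2 B0 (χ :: G') ltac:(pc))].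
Qed.

Lemma unbox_list : forall L G c, G4iSLt (boxes L ++ G) c -> G4iSLt (L ++ G) c.
Proof.
  induction L as [|a L IH]; intros G c H; simpl in *; auto.
  pose proof (unbox _ _ H a (boxes L ++ G) (Permutation_refl _)) as H1.
  assert (H2 : G4iSLt (L ++ a :: G) c) by (apply IH; gp H1).
  gp H2.
Qed.

Lemma impR_inv : forall D c, G4iSLt D c -> forall A B, c = Imp A B -> G4iSLt (A :: D) B.
Proof.
  induction 1; intros A0 B0 E; try discriminate.
  - apply (BotL _ (A0 :: Γ)); pc.
  - apply (AndL _ (A0 :: Γ) φ ψ); [pc | gp (IHG4iSLt A0 B0 E)].
  - apply (OrL _ (A0 :: Γ) φ ψ); [pc | gp (IHG4iSLt1 A0 B0 E) | gp (IHG4iSLt2 A0 B0 E)].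
  - apply (PImpL _ (A0 :: Γ) p φ); [pc | gp (IHG4iSLt A0 B0 E)].
  - injection E as -> ->. exact H.
  - destruct (box_dec A0) as [[A1 ->]|Hn].
    + apply (BoxImpL _ Φ (A1 :: Γ) φ ψ); [assumption | pc | gp (wk _ _ H1 A1) | gp (IHG4iSLt2 (Box A1) B0 E)].
    + apply (BoxImpL _ (A0 :: Φ) Γ φ ψ); [constructor; auto | pc | gp (wk _ _ H1 A0) | gp (IHG4iSLt2 A0 B0 E)].
  - apply (AndImpL _ (A0 :: Γ) φ ψ χ); [pc | gp (IHG4iSLt A0 B0 E)].
  - apply (OrImpL _ (A0 :: Γ) φ ψ χ); [pc | gp (IHG4iSLt A0 B0 E)].
  - apply (ImpImpL _ (A0 :: Γ) φ ψ χ); [pc | gp (wk _ _ H0 A0) | gp (IHG4iSLt2 A0 B0 E)].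
Qed.

Lemma inv_gen (R : form -> list form -> Prop)
  (HR : forall X Ys, R X Ys -> nb X)
  (H_and : forall A B Ys G c, R (And A B) Ys -> G4iSLt (A :: B :: G) c -> G4iSLt (Ys ++ G) c)
  (H_or : forall A B Ys G c, R (Or A B) Ys -> G4iSLt (A :: G) c -> G4iSLt (B :: G) c -> G4iSLt (Ys ++ G) c)
  (H_pimp : forall p C Ys G c, R (Imp (Var p) C) Ys -> G4iSLt (Var p :: C :: G) c -> G4iSLt (Ys ++ Var p :: G) c)
  (H_andimp : forall A B C Ys G c, R (Imp (And A B) C) Ys -> G4iSLt (Imp A (Imp B C) :: G) c -> G4iSLt (Ys ++ G) c)
  (H_orimp : forall A B C Ys G c, R (Imp (Or A B) C) Ys -> G4iSLt (Imp A C :: Imp B C :: G) c -> G4iSLt (Ys ++ G) c)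
  (H_impimp : forall A B C Ys G c, R (Imp (Imp A B) C) Ys -> G4iSLt (Imp B C :: G) (Imp A B) -> G4iSLt (C :: G) c -> G4iSLt (Ys ++ G) c)
  (H_boximp : forall A B Ys Phi G0 c, R (Imp (Box A) B) Ys -> box_free Phi -> G4iSLt (Box A :: B :: Phi ++ G0) A -> G4iSLt (B :: Phi ++ boxes G0) c -> G4iSLt (Ys ++ Phi ++ boxes G0) c) :
  forall D c, G4iSLt D c -> forall X Ys G, R X Ys -> Permutation D (X :: G) -> G4iSLt (Ys ++ G) c.
Proof.
  induction 1; intros X Ys G0 HRX HP; pose proof (HR _ _ HRX) as HnbX.
  - assert (HP' : Permutation (X :: G0) (Bot :: Γ)) by pc.
    apply perm_split in HP' as [[-> _]|(G' & H1 & H2)]; [simpl in HnbX; contradiction|].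
    apply (BotL _ (Ys ++ G')); pc.
  - assert (HP' : Permutation (X :: G0) (Var p :: Γ)) by pc.
    apply perm_split in HP' as [[-> _]|(G' & H1 & H2)]; [simpl in HnbX; contradiction|].
    apply (IdP _ (Ys ++ G')); pc.
  - assert (HP' : Permutation (X :: G0) (And φ ψ :: Γ)) by pc.
    apply perm_split in HP' as [[-> H2]|(G' & H1 & H2)].
    + gp (H_and φ ψ Ys Γ χ HRX H0).
    + apply (AndL _ (Ys ++ G') φ ψ); [pc | gp (IHG4iSLt X Ys (φ :: ψ :: G') HRX ltac:(pc))].
  - apply AndR; eauto.
  - assert (HP' : Permutation (X :: G0) (Or φ ψ :: Γ)) by pc.
    apply perm_split in HP' as [[-> H2]|(G' & H2 & H3)].
    + gp (H_or φ ψ Ys Γ χ HRX H0 H1).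
    + apply (OrL _ (Ys ++ G') φ ψ); [pc | gp (IHG4iSLt1 X Ys (φ :: G') HRX ltac:(pc)) | gp (IHG4iSLt2 X Ys (ψ :: G') HRX ltac:(pc))].
  - apply OrR1; eauto.
  - apply OrR2; eauto.
  - assert (HP' : Permutation (X :: G0) (Imp (Var p) φ :: Var p :: Γ)) by pc.
    apply perm_split in HP' as [[-> H2]|(G' & H1 & H2)].
    + gp (H_pimp p φ Ys Γ χ HRX H0).
    + assert (HP'' : Permutation (X :: G') (Var p :: Γ)) by pc.
      apply perm_split in HP'' as [[-> _]|(G'' & H3 & H4)]; [simpl in HnbX; contradiction|].
      apply (PImpL _ (Ys ++ G'') p φ); [pc | gp (IHG4iSLt X Ys (Var p :: φ :: G'') HRX ltac:(pc))].
  - apply ImpR. gp (IHG4iSLt X Ys (φ :: G0) HRX ltac:(pc)).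
  - assert (HP' : Permutation (X :: G0) (Imp (Box φ) ψ :: Φ ++ boxes Γ)) by pc.
    apply perm_split in HP' as [[-> H5]|(G' & H3 & H4)].
    + gp (H_boximp φ ψ Ys Φ Γ χ HRX H H1 H2).
    + destruct (perm_split_nb X G' Φ Γ (nb_nbox _ HnbX) ltac:(pc)) as (Phi1 & H5 & H6).
      destruct (split_ctx Ys) as (Yn & Yb & HYn & HY).
      pose proof (box_free_tail X Phi1 (box_free_perm _ _ H H5)) as HB1.
      apply (BoxImpL _ (Yn ++ Phi1) (Yb ++ Γ) φ ψ); [apply box_free_app; auto | pc | |].
      * pose proof (IHG4iSLt1 X Ys (Box φ :: ψ :: Phi1 ++ Γ) HRX ltac:(pc)) as I1.
        assert (I2 : G4iSLt (boxes Yb ++ (Yn ++ Box φ :: ψ :: Phi1 ++ Γ)) φ) by gp I1.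
        apply unbox_list in I2. gp I2.
      * gp (IHG4iSLt2 X Ys (ψ :: Phi1 ++ boxes Γ) HRX ltac:(pc)).
  - destruct (perm_split_nb X G0 Φ Γ (nb_nbox _ HnbX) ltac:(pc)) as (Phi1 & H5 & H6).
    destruct (split_ctx Ys) as (Yn & Yb & HYn & HY).
    pose proof (box_free_tail X Phi1 (box_free_perm _ _ H H5)) as HB1.
    apply (SLtR _ (Yn ++ Phi1) (Yb ++ Γ) φ); [apply box_free_app; auto | pc |].
    pose proof (IHG4iSLt X Ys (Box φ :: Phi1 ++ Γ) HRX ltac:(pc)) as I1.
    assert (I2 : G4iSLt (boxes Yb ++ (Yn ++ Box φ :: Phi1 ++ Γ)) φ) by gp I1.
    apply unbox_list in I2. gp I2.
  - assert (HP' : Permutation (X :: G0) (Imp (And φ ψ) χ :: Γ)) by pc.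
    apply perm_split in HP' as [[-> H2]|(G' & H1 & H2)].
    + gp (H_andimp φ ψ χ Ys Γ δ HRX H0).
    + apply (AndImpL _ (Ys ++ G') φ ψ χ); [pc | gp (IHG4iSLt X Ys (Imp φ (Imp ψ χ) :: G') HRX ltac:(pc))].
  - assert (HP' : Permutation (X :: G0) (Imp (Or φ ψ) χ :: Γ)) by pc.
    apply perm_split in HP' as [[-> H2]|(G' & H1 & H2)].
    + gp (H_orimp φ ψ χ Ys Γ δ HRX H0).
    + apply (OrImpL _ (Ys ++ G') φ ψ χ); [pc | gp (IHG4iSLt X Ys (Imp φ χ :: Imp ψ χ :: G') HRX ltac:(pc))].
  - assert (HP' : Permutation (X :: G0) (Imp (Imp φ ψ) χ :: Γ)) by pc.
    apply perm_split in HP' as [[-> H2]|(G' & H2 & H3)].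
    + gp (H_impimp φ ψ χ Ys Γ δ HRX H0 H1).
    + apply (ImpImpL _ (Ys ++ G') φ ψ χ); [pc | gp (IHG4iSLt1 X Ys (Imp ψ χ :: G') HRX ltac:(pc)) | gp (IHG4iSLt2 X Ys (χ :: G') HRX ltac:(pc))].
Qed.

Inductive inv_step : form -> list form -> Prop :=
| is_and A B : inv_step (And A B) [A; B]
| is_or1 A B : inv_step (Or A B) [A]
| is_or2 A B : inv_step (Or A B) [B]
| is_pimp p C : inv_step (Imp (Var p) C) [C]
| is_andimp A B C : inv_step (Imp (And A B) C) [Imp A (Imp B C)]
| is_orimp A B C : inv_step (Imp (Or A B) C) [Imp A C; Imp B C]
| is_impimp A B C : inv_step (Imp (Imp A B) C) [C]
| is_boximp A B : inv_step (Imp (Box A) B) [B].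

Lemma inv1 : forall D c, G4iSLt D c -> forall X Ys G, inv_step X Ys -> Permutation D (X :: G) -> G4iSLt (Ys ++ G) c.
Proof.
  apply inv_gen.
  - intros X Ys H; destruct H; simpl; auto.
  - intros A B Ys G c H H1; inversion H; subst; simpl; exact H1.
  - intros A B Ys G c H H1 H2; inversion H; subst; simpl; auto.
  - intros p C Ys G c H H1; inversion H; subst; simpl; gp H1.
  - intros A B C Ys G c H H1; inversion H; subst; simpl; auto.
  - intros A B C Ys G c H H1; inversion H; subst; simpl; auto.
  - intros A B C Ys G c H H1 H2; inversion H; subst; simpl; auto.
  - intros A B Ys Phi G0 c H H0 H1 H2; inversion H; subst; simpl; auto.
Qed.

Lemma GL : forall D psi, G4iSLt D psi -> forall S d c, G4iSLt (d :: D ++ S) c -> G4iSLt (Imp psi d :: D ++ S) c.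
Proof.
  induction 1; intros S d c Hd.
  - apply (BotL _ (Imp χ d :: Γ ++ S)); pc.
  - apply (PImpL _ (Γ ++ S) p d); [pc | gp Hd].
  - pose proof (inv1 _ _ Hd (And φ ψ) [φ; ψ] (d :: Γ ++ S) (is_and φ ψ) ltac:(pc)) as Hd'.
    simpl in Hd'.
    apply (AndL _ (Imp χ d :: Γ ++ S) φ ψ); [pc | gp (IHG4iSLt S d c ltac:(gp Hd'))].
  - apply (AndImpL _ (Γ ++ S) φ ψ d); [pc |].
    exact (IHG4iSLt1 S (Imp ψ d) c (IHG4iSLt2 S d c Hd)).
  - pose proof (inv1 _ _ Hd (Or φ ψ) [φ] (d :: Γ ++ S) (is_or1 φ ψ) ltac:(pc)) as Hd1.
    pose proof (inv1 _ _ Hd (Or φ ψ) [ψ] (d :: Γ ++ S) (is_or2 φ ψ) ltac:(pc)) as Hd2.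
    simpl in Hd1, Hd2.
    apply (OrL _ (Imp χ d :: Γ ++ S) φ ψ); [pc | gp (IHG4iSLt1 S d c ltac:(gp Hd1)) | gp (IHG4iSLt2 S d c ltac:(gp Hd2))].
  - apply (OrImpL _ (Γ ++ S) φ ψ d); [pc |].
    gp (IHG4iSLt (S ++ [Imp ψ d]) d c ltac:(gp (wk _ _ Hd (Imp ψ d)))).
  - apply (OrImpL _ (Γ ++ S) φ ψ d); [pc |].
    gp (IHG4iSLt (S ++ [Imp φ d]) d c ltac:(gp (wk _ _ Hd (Imp φ d)))).
  - pose proof (inv1 _ _ Hd (Imp (Var p) φ) [φ] (d :: Var p :: Γ ++ S) (is_pimp p φ) ltac:(pc)) as Hd'.
    simpl in Hd'.
    apply (PImpL _ (Imp χ d :: Γ ++ S) p φ); [pc | gp (IHG4iSLt S d c ltac:(gp Hd'))].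
  - apply (ImpImpL _ (Γ ++ S) φ ψ d); [pc | | exact Hd].
    apply ImpR. gp (wk_list (Imp ψ d :: S) _ _ H).
  - pose proof (inv1 _ _ Hd (Imp (Box φ) ψ) [ψ] (d :: Φ ++ boxes Γ ++ S) (is_boximp φ ψ) ltac:(pc)) as Hd'.
    simpl in Hd'.
    destruct (split_ctx S) as (Sn & Sb & HSn & HS).
    apply (BoxImpL _ (Imp χ d :: Φ ++ Sn) (Γ ++ Sb) φ ψ).
    + constructor; [simpl; tauto | apply box_free_app; auto].
    + pc.
    + gp (wk_list (Sn ++ Sb ++ [Imp χ d]) _ _ H1).
    + gp (IHG4iSLt2 S d c ltac:(gp Hd')).
  - destruct (split_ctx S) as (Sn & Sb & HSn & HS).
    apply (BoxImpL _ (Φ ++ Sn) (Γ ++ Sb) φ d).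
    + apply box_free_app; auto.
    + pc.
    + gp (wk_list (d :: Sn ++ Sb) _ _ H1).
    + gp Hd.
  - pose proof (inv1 _ _ Hd (Imp (And φ ψ) χ) [Imp φ (Imp ψ χ)] (d :: Γ ++ S) (is_andimp φ ψ χ) ltac:(pc)) as Hd'.
    simpl in Hd'.
    apply (AndImpL _ (Imp δ d :: Γ ++ S) φ ψ χ); [pc | gp (IHG4iSLt S d c ltac:(gp Hd'))].
  - pose proof (inv1 _ _ Hd (Imp (Or φ ψ) χ) [Imp φ χ; Imp ψ χ] (d :: Γ ++ S) (is_orimp φ ψ χ) ltac:(pc)) as Hd'.
    simpl in Hd'.
    apply (OrImpL _ (Imp δ d :: Γ ++ S) φ ψ χ); [pc | gp (IHG4iSLt S d c ltac:(gp Hd'))].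
  - pose proof (inv1 _ _ Hd (Imp (Imp φ ψ) χ) [χ] (d :: Γ ++ S) (is_impimp φ ψ χ) ltac:(pc)) as Hd'.
    simpl in Hd'.
    apply (ImpImpL _ (Imp δ d :: Γ ++ S) φ ψ χ); [pc | gp (wk_list (Imp δ d :: S) _ _ H0) | gp (IHG4iSLt2 S d c ltac:(gp Hd'))].
Qed.

Definition R2 (X : form) (Ys : list form) : Prop :=
  exists a b c, X = Imp (Imp a b) c /\ Ys = [a; Imp b c; Imp b c].

Lemma inv2 : forall D c, G4iSLt D c -> forall X Ys G, R2 X Ys -> Permutation D (X :: G) -> G4iSLt (Ys ++ G) c.
Proof.
  apply inv_gen.
  - intros X Ys (a & b & c & -> & _); simpl; auto.
  - intros A B Ys G c (a & b & c' & E & _); discriminate.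
  - intros A B Ys G c (a & b & c' & E & _); discriminate.
  - intros p C Ys G c (a & b & c' & E & _); discriminate.
  - intros A B C Ys G c (a & b & c' & E & _); discriminate.
  - intros A B C Ys G c (a & b & c' & E & _); discriminate.
  - intros A B C Ys G c (a & b & c' & E & ->) H1 H2.
    injection E; intros; subst.
    pose proof (impR_inv _ _ H1 a b eq_refl) as H3.
    pose proof (GL _ _ H3 [] c' c ltac:(gp (wk_list [a; Imp b c'] _ _ H2))) as H4.
    gp H4.
  - intros A B Ys Phi G0 c (a & b & c' & E & _); discriminate.
Qed.

Theorem mainTheorem12 : forall (Γ : list form) (φ ψ δ χ : form),
  G4iSLt (Imp (Imp φ ψ) δ :: Γ) χ ->
  G4iSLt (φ :: Imp ψ δ :: Imp ψ δ :: Γ) χ.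
Proof.
  intros Γ φ ψ δ χ H.
  apply (inv2 _ _ H (Imp (Imp φ ψ) δ) [φ; Imp ψ δ; Imp ψ δ] Γ).
  - exists φ, ψ, δ; auto.
  - apply Permutation_refl.
Qed.
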